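(* If $F$ is an apexed $\ell$-frame and $u,v\in V(F)$, then some hole of $F$ contains both $u$ and $v$.
   Context: A hole is an induced cycle of length at least four. A threshold graph is a graph with no induced four-vertex path, four-vertex cycle, or complement of a four-vertex cycle. $\ell$-frame for odd $\ell\ge5$: let $k\ge3$ and let $a_1,\dots,a_k,b_1,\dots,b_k$ be distinct vertices; for $1\le i\le k$ let $P_i$ be a path of length $(\ell-3)/2$ with ends $a_i,b_i$, pairwise vertex-disjoint. Let $A,B$ be graphs on $\{a_1,\dots,a_k\}$ and $\{b_1,\dots,b_k\}$ that are threshold graphs, with $b_ib_j$ an edge iff $a_ia_j$ is not an edge ($i<j$), each of $A,B$ either disconnected or two-connected. The $\ell$-frame is the union $A\cup B\cup P_1\cup\dots\cup P_k$ (no other edges). Exactly one of $A,B$ is disconnected; the apexed $\ell$-frame is obtained by adding a new vertex (the apex) adjacent exactly to all vertices of the disconnected one. $\ell$-frame for even $\ell\ge6$: let $m\ge0$, $n\ge2$, $m+n\ge3$, and let $a_1,\dots,a_n,c_1,\dots,c_m,b_1,\dots,b_n,d_1,\dots,d_m$ be distinct. $P_i$ ($1\le i\le n$) is a path of length $\ell/2-2$ between $a_i,b_i$; $Q_i$ ($1\le i\le m$) is a path of length $\ell/2-1$ between $c_i,d_i$; all pairwise vertex-disjoint. $A$ on $\{a_i\}\cup\{c_j\}$ and $B$ on $\{b_i\}\cup\{d_j\}$: $\{c_j\}$ and $\{d_j\}$ are cliques; $\{a_i\}$, $\{b_i\}$ are stable; the bipartite graph of $A$ between $\{a_i\}$ and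 $\{c_j\}$ has no induced two-edge matching; $b_id_j$ is an edge iff $a_ic_j$ is not; some $a_i$ has degree zero in $A$ and some $b_i$ has degree zero in $B$; no other edges. The $\ell$-frame is $A\cup B\cup P_1\cup\dots\cup P_n\cup Q_1\cup\dots\cup Q_m$. The apexed $\ell$-frame is obtained by adding two new vertices, one adjacent exactly to all vertices of $A$ and one adjacent exactly to all vertices of $B$. *)

(* Defs.v *)
From mathcomp Require Import all_boot.
Set Implicit Arguments. Unset Strict Implicit. Unset Printing Implicit Defensive.

Section Graphs.
Variable T : finType.

(* C is a hole of (T,e): the vertex set of an induced cycle of length >= 4.
   s lists the cycle in order (x0 is an irrelevant default); adjacency among vertices of s is exactly
   cyclic consecutiveness. *)
Definition hole (e : rel T) (C : {set T}) : Prop :=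
  exists (x0 : T) (s : seq T),
    [/\ uniq s, 4 <= size s, C = [set x in s] &
      forall i j, i < size s -> j < size s ->
        e (nth x0 s i) (nth x0 s j) =
        (j == i.+1 %% size s) || (i == j.+1 %% size s)].

Definition path_edge (s : seq T) (x y : T) : Prop :=
  exists j, j.+1 < size s /\
    ((x = nth x s j /\ y = nth x s j.+1) \/ (y = nth y s j /\ x = nth y s j.+1)).
End Graphs.

Section IndexGraphs.
Variable I : finType.

Definition connected_graph (g : rel I) : Prop := forall i j, connect g i j.

Definition two_connected (g : rel I) : Prop :=
  connected_graph g /\
  forall v i j, i != v -> j != v ->
    connect [rel x y | [&& x != v, y != v & g x y]] i j.

(* threshold graph: no induced P4, C4 or 2K2 (complement of C4) *)
Definition threshold (g : rel I) : Prop :=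
  forall w x y z : I, uniq [:: w; x; y; z] ->
    ~ [/\ g w x, g x y, g y z, ~~ g w y & ~~ g x z && ~~ g w z] /\
    ~ [/\ g w x, g x y, g y z, g z w & ~~ g w y && ~~ g x z] /\
    ~ [/\ g w x, g y z, ~~ g w y, ~~ g w z & ~~ g x y && ~~ g x z].
End IndexGraphs.

(* vertex sequence of P_i = a_i, (interior Q_i), b_i *)
Definition fpath (T : finType) (x : T) (q : seq T) (y : T) : seq T :=
  x :: rcons q y.

Definition odd_apexed_frame (l : nat) (T : finType) (e : rel T) : Prop :=
  exists (k : nat) (rA : rel 'I_k) (a b : 'I_k -> T) (Q : 'I_k -> seq T) (z : T),
    let gA := [rel i j | (i != j) && rA i j] in
    let gB := [rel i j | (i != j) && ~~ rA i j] in
    let P := fun i => fpath (a i) (Q i) (b i) in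
    [/\ 3 <= k, symmetric rA,
        (* P_i has length (l-3)/2, i.e. (l-3)/2 - 1 interior vertices *)
        (forall i, (size (Q i)).+1 = (l - 3) %/ 2),
        uniq (z :: flatten [seq P i | i <- enum 'I_k]) /\
        (forall x, x \in z :: flatten [seq P i | i <- enum 'I_k]) &
        [/\ threshold gA, threshold gB,
            ~ connected_graph gA \/ two_connected gA,
            ~ connected_graph gB \/ two_connected gB &
            (* edge set: A, B, the paths, and the apex joined to the
               disconnected one of A, B *)
            forall x y, e x y <->
              (exists i j, [/\ x = a i, y = a j & gA i j]) \/
              (exists i j, [/\ x = b i, y = b j & gB i j]) \/
              (exists i, path_edge (P i) x y) \/
              (~ connected_graph gA /\
                 ((x = z /\ exists i, y = a i) \/ (y = z /\ exists i, x = a i))) \/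
              (~ connected_graph gB /\
                 ((x = z /\ exists i, y = b i) \/ (y = z /\ exists i, x = b i)))]].

Definition even_apexed_frame (l : nat) (T : finType) (e : rel T) : Prop :=
  exists (m n : nat) (r : 'I_n -> 'I_m -> bool)
         (a b : 'I_n -> T) (c d : 'I_m -> T)
         (QP : 'I_n -> seq T) (QQ : 'I_m -> seq T) (za zb : T),
    let P := fun i => fpath (a i) (QP i) (b i) in
    let Q := fun j => fpath (c j) (QQ j) (d j) in
    let V := za :: zb :: flatten [seq P i | i <- enum 'I_n]
                ++ flatten [seq Q j | j <- enum 'I_m] in
    [/\ 2 <= n /\ 3 <= m + n,
        (* P_i has length l/2 - 2, Q_j has length l/2 - 1 *)
        (forall i, (size (QP i)).+1 = l %/ 2 - 2) /\
        (forall j, (size (QQ j)).+1 = l %/ 2 - 1),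
        uniq V /\ (forall x, x \in V),
        (* the bipartite graph of A between {a_i} and {c_j} has no induced
           two-edge matching *)
        (forall i1 i2 j1 j2, ~ [/\ r i1 j1, r i2 j2, ~~ r i1 j2 & ~~ r i2 j1]) /\
        (* some a_i has degree 0 in A; some b_i has degree 0 in B *)
        (exists i, forall j, ~~ r i j) /\ (exists i, forall j, r i j) &
        forall x y, e x y <->
          (* A: c's form a clique, a's are stable, a_i c_j iff r i j *)
          (exists j1 j2, [/\ x = c j1, y = c j2 & j1 != j2]) \/
          (exists i j, (x = a i /\ y = c j \/ y = a i /\ x = c j) /\ r i j) \/
          (* B: d's form a clique, b's are stable, b_i d_j iff not r i j *)
          (exists j1 j2, [/\ x = d j1, y = d j2 & j1 != j2]) \/
          (exists i j, (x = b i /\ y = d j \/ y = b i /\ x = d j) /\ ~~ r i j) \/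
          (exists i, path_edge (P i) x y) \/
          (exists j, path_edge (Q j) x y) \/
          ((x = za /\ ((exists i, y = a i) \/ (exists j, y = c j))) \/
           (y = za /\ ((exists i, x = a i) \/ (exists j, x = c j)))) \/
          ((x = zb /\ ((exists i, y = b i) \/ (exists j, y = d j))) \/
           (y = zb /\ ((exists i, x = b i) \/ (exists j, x = d j))))].

(* F (given as (T,e)) is an apexed l-frame, up to isomorphism *)
Definition apexed_frame (l : nat) (T : finType) (e : rel T) : Prop :=
  (odd l /\ 5 <= l /\ odd_apexed_frame l e) \/
  (~~ odd l /\ 6 <= l /\ even_apexed_frame l e).

(* Main.v *)
Require Import Defs.
From mathcomp Require Import all_boot zify.
Set Implicit Arguments. Unset Strict Implicit. Unset Printing Implicit Defensive.


Definition cyc (N p q : nat) : bool :=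
  ((p.+1 < N) && (q == p.+1)) || ((p.+1 == N) && (q == 0)) ||
  ((q.+1 < N) && (p == q.+1)) || ((q.+1 == N) && (p == 0)).

Lemma modS_eq N p q : p < N -> (q == p.+1 %% N) = ((p.+1 < N) && (q == p.+1)) || ((p.+1 == N) && (q == 0)).
Proof.
move=> hp; have [h|h] := ltnP p.+1 N.
- rewrite modn_small //; lia.
- have e1 : p.+1 = N by apply/eqP; rewrite eqn_leq h hp.
  rewrite e1 modnn; lia.
Qed.

Section Gen.
Variables (T : finType) (e : rel T).

Lemma hole_mk (f : nat -> T) N : 4 <= N ->
  (forall p q, p < N -> q < N -> f p = f q -> p = q) ->
  (forall p q, p < N -> q < N -> e (f p) (f q) = cyc N p q) ->
  hole e [set x in mkseq f N].
Proof.
move=> hN hinj hadj; exists (f 0), (mkseq f N); split.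
- rewrite map_inj_in_uniq ?iota_uniq // => p q; rewrite !mem_iota /= !add0n.
  exact: hinj.
- by rewrite size_mkseq.
- by [].
- move=> i j; rewrite size_mkseq => hi hj; rewrite !nth_mkseq // hadj //.
  by rewrite /cyc !modS_eq // !orbA.
Qed.

Lemma mem_mk (f : nat -> T) N p : p < N -> f p \in [set x in mkseq f N].
Proof. by move=> hp; rewrite inE; apply: map_f; rewrite mem_iota. Qed.
End Gen.


Inductive od (k : nat) := OZ | OP of 'I_k & nat.
Arguments OZ {k}.

Ltac clr := repeat match goal with
 | H : is_true (_ != _) |- _ => clear H
 | H : is_true (~~ _) |- _ => clear H
 | H : forall _, _ |- _ => clear H
 | H : is_true (?g _ _) |- _ => lazymatch type of g with rel (ordinal _) => clear H end
 end.
Ltac kill_ne := match goal with H : is_true (?x != ?x) |- _ => by rewrite eqxx in H end.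
Ltac solve_inj :=
  let H := fresh "H" in move=> H;
  first [ discriminate H
        | injection H; intros; subst; first [kill_ne | clr; lia]
        | clear H; clr; lia ].
Ltac splitifs := repeat (case: ifP => ?).

Section OddCore.
Variables (T : finType) (e : rel T) (k L : nat) (gA : rel 'I_k) (emb : od k -> T).
Definition validO (d : od k) := if d is OP _ t then t <= L else true.
Definition adjO (x y : od k) : bool :=
 match x, y with
 | OZ, OZ => false
 | OZ, OP _ t => t == L
 | OP _ t, OZ => t == L
 | OP i t, OP j t' => if i == j then (t.+1 == t') || (t'.+1 == t)
     else ((t == 0) && (t' == 0) && gA i j) || ((t == L) && (t' == L) && ~~ gA i j)
 end.

Hypotheses (Hk : 0 < k) (HL : 1 <= L) (Hsym : symmetric gA) (Hirr : irreflexive gA)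
 (Hnb : forall i, exists j, gA i j)
 (Hd2 : forall i j, i != j -> ~~ gA i j -> exists h, gA i h && gA h j)
 (Hinj : forall x y, validO x -> validO y -> emb x = emb y -> x = y)
 (Hcov : forall x, exists2 d, validO d & x = emb d)
 (Hadj : forall x y, validO x -> validO y -> e (emb x) (emb y) = adjO x y).

Definition f1 (i j : 'I_k) p : od k :=
  if p == 0 then OZ else if p <= L.+1 then OP i (L.+1 - p) else OP j (p - L.+2).
Definition f2 (i j h : 'I_k) p : od k :=
  if p <= L then OP i p else if p <= L + L + 1 then OP j (L + L + 1 - p) else OP h 0.

Lemma gne i j : gA i j -> i != j.
Proof. by move=> hij; apply: contraTneq hij => ->; rewrite Hirr. Qed.

Lemma hole1 i j : gA i j -> hole e [set x in mkseq (emb \o f1 i j) (L + L + 3)].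
Proof.
move=> hij; have hne := gne hij.
have hji : gA j i by rewrite Hsym.
have hne' : j != i by rewrite eq_sym.
have hv : forall p, p < L + L + 3 -> validO (f1 i j p).
  by move=> p hp; rewrite /f1; splitifs => //=; clr; lia.
apply: hole_mk; first by clr; lia.
- move=> p q hp hq /= HH; have := Hinj (hv p hp) (hv q hq) HH; rewrite /f1.
  by splitifs; solve_inj.
- move=> p q hp hq /=; rewrite Hadj ?hv //; rewrite /f1; splitifs;
  rewrite /adjO ?eqxx ?(negbTE hne) ?(negbTE hne') ?hij ?hji /cyc /=; clr; lia.
Qed.

Lemma hole2 i j h : i != j -> ~~ gA i j -> gA i h -> gA h j ->
  hole e [set x in mkseq (emb \o f2 i j h) (L + L + 3)].
Proof.
move=> hne hgij hih hhj.
have hji : ~~ gA j i by rewrite Hsym.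
have hne' : j != i by rewrite eq_sym.
have hhi : gA h i by rewrite Hsym.
have hjh : gA j h by rewrite Hsym.
have n1 := gne hih; have n2 := gne hhi; have n3 := gne hhj; have n4 := gne hjh.
have hv : forall p, p < L + L + 3 -> validO (f2 i j h p).
  by move=> p hp; rewrite /f2; splitifs => //=; clr; lia.
apply: hole_mk; first by clr; lia.
- move=> p q hp hq /= HH; have := Hinj (hv p hp) (hv q hq) HH; rewrite /f2.
  by splitifs; solve_inj.
- move=> p q hp hq /=; rewrite Hadj ?hv //; rewrite /f2; splitifs;
  rewrite /adjO ?eqxx ?(negbTE hne) ?(negbTE hne') ?(negbTE hgij) ?(negbTE hji)
    ?(negbTE n1) ?(negbTE n2) ?(negbTE n3) ?(negbTE n4) ?hih ?hhi ?hjh ?hhj /cyc /=; clr; lia.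
Qed.

Lemma in1z i j : emb OZ \in [set x in mkseq (emb \o f1 i j) (L + L + 3)].
Proof. by have := mem_mk (emb \o f1 i j) (_ : 0 < L + L + 3); apply; lia. Qed.
Lemma in1i i j t : t <= L -> emb (OP i t) \in [set x in mkseq (emb \o f1 i j) (L + L + 3)].
Proof.
move=> ht; have -> : OP i t = f1 i j (L.+1 - t).
  rewrite /f1; splitifs; [lia| congr OP; lia | lia].
by apply: (mem_mk (emb \o f1 i j)); lia.
Qed.
Lemma in1j i j t : t <= L -> emb (OP j t) \in [set x in mkseq (emb \o f1 i j) (L + L + 3)].
Proof.
move=> ht; have -> : OP j t = f1 i j (t + L.+2).
  rewrite /f1; splitifs; [lia| lia | congr OP; lia].
by apply: (mem_mk (emb \o f1 i j)); lia.
Qed.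
Lemma in2i i j h t : t <= L -> emb (OP i t) \in [set x in mkseq (emb \o f2 i j h) (L + L + 3)].
Proof.
move=> ht; have -> : OP i t = f2 i j h t by rewrite /f2 ht.
by apply: (mem_mk (emb \o f2 i j h)); lia.
Qed.
Lemma in2j i j h t : t <= L -> emb (OP j t) \in [set x in mkseq (emb \o f2 i j h) (L + L + 3)].
Proof.
move=> ht; have -> : OP j t = f2 i j h (L + L + 1 - t).
  rewrite /f2; splitifs; [lia| congr OP; lia | lia].
by apply: (mem_mk (emb \o f2 i j h)); lia.
Qed.

Lemma odd_core u v : exists C, hole e C /\ u \in C /\ v \in C.
Proof.
have hz : forall d, validO d -> exists C, hole e C /\ emb OZ \in C /\ emb d \in C.
  case=> [|j t] /= hv.
    have [j hj] := Hnb (Ordinal Hk).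
    by exists [set x in mkseq (emb \o f1 (Ordinal Hk) j) (L + L + 3)];
      split; [exact: hole1 | split; exact: in1z].
  have [j2 hj] := Hnb j.
  by exists [set x in mkseq (emb \o f1 j j2) (L + L + 3)];
    split; [exact: hole1 | split; [exact: in1z | exact: in1i]].
have [du hdu ->] := Hcov u; have [dv hdv ->] := Hcov v.
case: du hdu => [|i t] hdu; first exact: hz.
case: dv hdv => [|j t'] hdv.
  by have [C [h1 [h2 h3]]] := hz _ hdu; exists C.
case: (eqVneq i j) => [<-|hne].
  have [j2 hj] := Hnb i.
  by exists [set x in mkseq (emb \o f1 i j2) (L + L + 3)];
    split; [exact: hole1 | split; exact: in1i].
case: (boolP (gA i j)) => hg.
  by exists [set x in mkseq (emb \o f1 i j) (L + L + 3)];
    split; [exact: hole1 | split; [exact: in1i | exact: in1j]].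
have [h /andP [h1 h2]] := Hd2 hne hg.
by exists [set x in mkseq (emb \o f2 i j h) (L + L + 3)];
  split; [exact: hole2 | split; [exact: in2i | exact: in2j]].
Qed.
End OddCore.


Section IG.
Variables (I : finType) (g : rel I).
Hypotheses (gsym : symmetric g) (girr : irreflexive g).

Lemma not_conn : ~ connected_graph g -> exists p q, ~~ connect g p q.
Proof.
move=> hn.
have : ~~ [forall i, [forall j, connect g i j]].
  apply/negP => /forallP H; apply: hn => i j; exact: (forallP (H i) j).
by move/forallPn => [p /forallPn [q hpq]]; exists p, q.
Qed.

Lemma conn_compl (h : rel I) : (forall i j, i != j -> ~~ g i j -> h i j) ->
  ~ connected_graph g -> connected_graph h.
Proof.
move=> hc /not_conn [p [q hpq]] i j.
case: (eqVneq i j) => [->|hij]; first exact: connect0.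
case: (boolP (g i j)) => gij; last by apply: connect1; apply: hc.
have [w hw] : exists w, ~~ connect g i w.
  case: (boolP (connect g i p)) => hp; last by exists p.
  exists q; apply: contra hpq => hq.
  by apply: connect_trans hq; rewrite (sym_connect_sym gsym).
have hjw : ~~ connect g j w.
  by apply: contra hw => hjw; apply: connect_trans hjw; apply: connect1.
have hiw : i != w by apply: contraNneq hw => ->; apply: connect0.
have hjw' : j != w by apply: contraNneq hjw => ->; apply: connect0.
have giw : ~~ g i w by apply: contra hw => /connect1.
have gjw : ~~ g w j by rewrite gsym; apply: contra hjw => /connect1.
apply: (@connect_trans _ _ w); apply: connect1; apply: hc => //.
by rewrite eq_sym.
Qed.

Hypothesis gth : threshold g.

Lemma d2 i j : connect g i j -> i != j -> ~~ g i j -> exists h, g i h && g h j.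
Proof.
pose D y := (y == i) || g i y || [exists w, g i w && g w y].
have Dstep : forall x y, D x -> g x y -> D y.
  move=> x y hx gxy.
  case: (eqVneq y i) => [->|hyi]; first by rewrite /D eqxx.
  case: (boolP (g i y)) => giy; first by rewrite /D giy orbT.
  case: (eqVneq x i) => [exi|hxi]; first by rewrite -exi in giy; rewrite gxy in giy.
  case: (boolP (g i x)) => gix.
    by rewrite /D; apply/orP; right; apply/existsP; exists x; rewrite gix gxy.
  move: hx; rewrite /D (negbTE hxi) (negbTE gix) /= => /existsP [w /andP [giw gwx]].
  case: (boolP (g w y)) => gwy.
    by apply/orP; right; apply/existsP; exists w; rewrite giw gwy.
  exfalso.
  have hu : uniq [:: i; w; x; y].
    rewrite /= !inE !negb_or.
    have -> : i != w by apply: contraTneq giw => ->; rewrite girr.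
    have -> : w != x by apply: contraTneq gwx => ->; rewrite girr.
    have -> : x != y by apply: contraTneq gxy => ->; rewrite girr.
    have -> : w != y by apply: contraNneq giy => <-.
    by rewrite eq_sym hxi eq_sym hyi.
  have [H _] := gth hu.
  by apply: H; split => //; rewrite gwy giy.
move=> /connectP [p hp ->] hne hg.
have : D (last i p).
  have : forall x, path g x p -> D x -> D (last x p).
    elim: p {hne hg hp} => [|y p IH] x //= /andP [gxy hp] hx.
    by apply: IH => //; apply: Dstep gxy.
  by apply => //; rewrite /D eqxx.
rewrite /D eq_sym (negbTE hne) (negbTE hg) /= => /existsP [w hw].
by exists w.
Qed.

Lemma dom (i0 : I) : connected_graph g -> exists x, forall y, y != x -> g x y.
Proof.
move=> hc.
pose N x := [set y | g x y].
case: (@arg_maxnP I i0 predT (fun x => #|N x|) isT) => x _ hmax.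
exists x => y hyx; apply/negPn/negP => gxy.
have hxy0 : x != y by rewrite eq_sym.
have [w /andP [gxw gwy]] := d2 (hc x y) hxy0 gxy.
have hxy : x != y by rewrite eq_sym.
pose S := x |: (N x :\ w).
have hS : S \proper N w.
  apply/properP; split.
  - apply/subsetP => z; rewrite !inE => /orP [/eqP -> | /andP [hzw gxz]]; first by rewrite gsym.
    apply/negPn/negP => gwz.
    have hu : uniq [:: z; x; w; y].
      rewrite /= !inE !negb_or.
      have -> : z != x by apply: contraTneq gxz => ->; rewrite girr.
      have -> : x != w by apply: contraTneq gxw => ->; rewrite girr.
      have -> : w != y by apply: contraTneq gwy => ->; rewrite girr.
      have -> : z != y by apply: contraTneq gxz => ->; rewrite (negbTE gxy).
      by rewrite hzw hxy.
    have [H1 [H2 _]] := gth hu.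
    have gzx : g z x by rewrite gsym.
    have gwz' : ~~ g z w by rewrite gsym.
    case: (boolP (g z y)) => gzy.
    + by apply: H2; split => //; [rewrite gsym | rewrite gwz' gxy].
    + by apply: H1; split => //; rewrite gxy gzy.
  - exists y; first by rewrite inE.
    by rewrite !inE negb_or (negbTE gxy) andbF eq_sym hxy.
have := proper_card hS.
rewrite cardsU1 !inE girr andbF /=.
have := hmax w isT; have := cardsD1 w (N x); rewrite inE gxw /=.
move: #|N x :\ w| #|N x| #|N w| => a b c; lia.
Qed.
End IG.

Lemma isolated_disc (I : finType) (h : rel I) x y : y != x -> (forall z, ~~ h x z) -> ~ connected_graph h.
Proof.
move=> hyx hiso hc; move: (hc x y) => /connectP [[|z p] /= hp hl].
  by rewrite hl eqxx in hyx.
by move: hp; rewrite (negbTE (hiso z)).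
Qed.



Section OddTr.
Variables (T : finType) (e : rel T) (k L : nat) (rA : rel 'I_k) (a b : 'I_k -> T)
  (Q : 'I_k -> seq T) (z : T).
Definition Po i := Defs.fpath (a i) (Q i) (b i).
Arguments Po : simpl never.
Hypotheses (Hsz : forall i, (size (Q i)).+1 = L)
 (Hu : uniq (z :: flatten [seq Po i | i <- enum 'I_k]))
 (Hc : forall x, x \in z :: flatten [seq Po i | i <- enum 'I_k]).

Definition embO (d : od k) : T := match d with OZ => z | OP i t => nth z (Po i) t end.

Lemma size_Po i : size (Po i) = L.+1.
Proof. by rewrite /Po /Defs.fpath /= size_rcons Hsz. Qed.
Lemma Po_L i : nth z (Po i) L = b i.
Proof. by rewrite /Po /Defs.fpath -(Hsz i) /= nth_rcons ltnn eqxx. Qed.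

Lemma uf (r : seq 'I_k) : uniq r -> uniq (flatten [seq Po i | i <- r]) ->
  (forall i, i \in r -> uniq (Po i)) /\
  (forall i j x, i \in r -> j \in r -> x \in Po i -> x \in Po j -> i = j).
Proof.
elim: r => [|y r IH] //; rewrite cons_uniq map_cons => /andP [hy hr].
rewrite (_ : flatten (Po y :: [seq Po i | i <- r]) = Po y ++ flatten [seq Po i | i <- r]) //.
rewrite cat_uniq => /and3P [u1 hn u2].
have [IH1 IH2] := IH hr u2.
have hf : forall x j, j \in r -> x \in Po j -> x \notin Po y.
  move=> x j hj hx; apply: (hasPn hn); apply/flatten_mapP; by exists j.
split.
- by move=> i; rewrite in_cons => /orP [/eqP -> // | /IH1].
- move=> i j x hi' hj' hxi hxj; move: hi' hj'; rewrite !in_cons => /orP [/eqP E1 | hi] /orP [/eqP E2 | hj]; subst => //.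
  + by move: (hf _ _ hj hxj); rewrite hxi.
  + by move: (hf _ _ hi hxi); rewrite hxj.
  + exact: IH2 hi hj hxi hxj.
Qed.

Lemma flat_facts : (forall i, uniq (Po i)) /\ (forall i j x, x \in Po i -> x \in Po j -> i = j)
  /\ (forall i, z \notin Po i).
Proof.
move: Hu; rewrite cons_uniq => /andP [hz hu].
have [h1 h2] := uf (enum_uniq 'I_k) hu.
split; [|split].
- by move=> i; apply: h1; rewrite mem_enum.
- by move=> i j x; apply: h2; rewrite mem_enum.
- move=> i; apply: contra hz => hzi; apply/flatten_mapP; exists i => //; by rewrite mem_enum.
Qed.

Lemma embO_inj x y : validO L x -> validO L y -> embO x = embO y -> x = y.
Proof.
have [fu [fi fz]] := flat_facts.
have hmem : forall i t, t <= L -> nth z (Po i) t \in Po i.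
  by move=> i t ht; apply: mem_nth; rewrite size_Po.
case: x => [|i t]; case: y => [|j t'] //= hx hy.
- by move=> hz; move: (fz j); rewrite {1}hz hmem.
- by move=> hz; move: (fz i); rewrite -{1}hz hmem.
- move=> h; have := hmem j t' hy; rewrite -h => hj.
  have hij := fi _ _ _ (hmem i t hx) hj; subst j.
  by move/eqP: h; rewrite nth_uniq ?size_Po // => /eqP ->.
Qed.

Lemma embO_cov x : exists2 d, validO L d & x = embO d.
Proof.
move: (Hc x); rewrite inE => /orP [/eqP -> | /flatten_mapP [i _ hx]]; first by exists OZ.
exists (OP i (index x (Po i))) => /=; last by rewrite nth_index.
by have := index_mem x (Po i); rewrite size_Po ltnS hx.
Qed.

Lemma pe_embO i dx dy : validO L dx -> validO L dy ->
  path_edge (Po i) (embO dx) (embO dy) <->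
  exists t, t < L /\ ((dx = OP i t /\ dy = OP i t.+1) \/ (dy = OP i t /\ dx = OP i t.+1)).
Proof.
move=> hx hy; split.
- move=> [j [hj H]]; rewrite size_Po in hj; exists j; split => //.
  have v1 : validO L (OP i j) by rewrite /= ltnW.
  have v2 : validO L (OP i j.+1) by [].
  have hj1 : j < size (Po i) by rewrite size_Po ltnW.
  have hj2 : j.+1 < size (Po i) by rewrite size_Po.
  case: H => [[h1 h2] | [h1 h2]]; [left | right];
    rewrite (set_nth_default z _ hj1) in h1; rewrite (set_nth_default z _ hj2) in h2.
  + by split; [apply: (embO_inj hx v1 h1) | apply: (embO_inj hy v2 h2)].
  + by split; [apply: (embO_inj hy v1 h1) | apply: (embO_inj hx v2 h2)].
- move=> [t [ht [[-> ->] | [-> ->]]]]; exists t; rewrite size_Po; split => //.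
  + have hj1 : t < size (Po i) by rewrite size_Po ltnW.
    have hj2 : t.+1 < size (Po i) by rewrite size_Po.
    by left; rewrite (set_nth_default z _ hj1) (set_nth_default z _ hj2).
  + have hj1 : t < size (Po i) by rewrite size_Po ltnW.
    have hj2 : t.+1 < size (Po i) by rewrite size_Po.
    by right; rewrite (set_nth_default z _ hj1) (set_nth_default z _ hj2).
Qed.

Definition adjOG (bA bB : bool) (x y : od k) : bool :=
 match x, y with
 | OZ, OZ => false
 | OZ, OP _ t => ((t == 0) && bA) || ((t == L) && bB)
 | OP _ t, OZ => ((t == 0) && bA) || ((t == L) && bB)
 | OP i t, OP j t' => if i == j then (t.+1 == t') || (t'.+1 == t)
     else ((t == 0) && (t' == 0) && rA i j) || ((t == L) && (t' == L) && ~~ rA i j)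
 end.

Lemma eO (cA cB : Prop) (bA bB : bool) : (cA <-> bA) -> (cB <-> bB) ->
 (forall x y, e x y <->
   (exists i j, [/\ x = a i, y = a j & (i != j) && rA i j]) \/
   (exists i j, [/\ x = b i, y = b j & (i != j) && ~~ rA i j]) \/
   (exists i, path_edge (Po i) x y) \/
   (cA /\ ((x = z /\ exists i, y = a i) \/ (y = z /\ exists i, x = a i))) \/
   (cB /\ ((x = z /\ exists i, y = b i) \/ (y = z /\ exists i, x = b i)))) ->
 forall x y, validO L x -> validO L y -> e (embO x) (embO y) = adjOG bA bB x y.
Proof.
move=> hA hB HE x y hx hy.
have ea : forall i, a i = embO (OP i 0) by [].
have eb : forall i, b i = embO (OP i L) by move=> i; rewrite /= Po_L.
have v0 : forall i : 'I_k, validO L (OP i 0) by [].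
have vL : forall i : 'I_k, validO L (OP i L) by move=> i; rewrite /= leqnn.
have vZ : validO L (@OZ k) by [].
apply/idP/idP.
- move/HE => [ [i [j [ex ey g]]] | [ [i [j [ex ey g]]] | [ [i hp] |
    [ [cA' [[ex [i ey]] | [ey [i ex]]]] | [cB' [[ex [i ey]] | [ey [i ex]]]] ]]]].
  + rewrite ea in ex; rewrite ea in ey.
    rewrite (embO_inj hx (v0 i) ex) (embO_inj hy (v0 j) ey) /=.
    by case/andP: g => hij r; rewrite (negbTE hij) r.
  + rewrite eb in ex; rewrite eb in ey.
    rewrite (embO_inj hx (vL i) ex) (embO_inj hy (vL j) ey) /=.
    by case/andP: g => hij r; rewrite (negbTE hij) r eqxx orbT.
  + move/(pe_embO i hx hy): hp => [t [ht [[-> ->] | [-> ->]]]] /=; by rewrite !eqxx ?orbT.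
  + rewrite ea in ey; have -> : x = OZ by apply: embO_inj.
    by rewrite (embO_inj hy (v0 i) ey) /=; have := proj1 hA cA' => ->.
  + rewrite ea in ex; have -> : y = OZ by apply: embO_inj.
    by rewrite (embO_inj hx (v0 i) ex) /=; have := proj1 hA cA' => ->.
  + rewrite eb in ey; have -> : x = OZ by apply: embO_inj.
    by rewrite (embO_inj hy (vL i) ey) /= eqxx; have := proj1 hB cB' => ->; rewrite orbT.
  + rewrite eb in ex; have -> : y = OZ by apply: embO_inj.
    by rewrite (embO_inj hx (vL i) ex) /= eqxx; have := proj1 hB cB' => ->; rewrite orbT.
- case: x hx => [|i t] hx; case: y hy => [|j t'] hy //=.
  + move=> /orP [/andP [/eqP -> hbA] | /andP [/eqP -> hbB]]; apply/HE.
    * right; right; right; left; split; first exact: (proj2 hA).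
      by left; split => //; exists j.
    * right; right; right; right; split; first exact: (proj2 hB).
      by left; split => //; exists j; rewrite eb.
  + move=> /orP [/andP [/eqP -> hbA] | /andP [/eqP -> hbB]]; apply/HE.
    * right; right; right; left; split; first exact: (proj2 hA).
      by right; split => //; exists i.
    * right; right; right; right; split; first exact: (proj2 hB).
      by right; split => //; exists i; rewrite eb.
  + move: hy; case: (eqVneq i j) => [<-|hij] hy.
    * move=> /orP [/eqP ht | /eqP ht]; apply/HE; right; right; left; exists i;
        apply: (proj2 (pe_embO i hx hy)).
      - by exists t; rewrite -ht in hy *; split => //; left.
      - by exists t'; rewrite -ht in hx *; split => //; right.
    * move=> /orP [/andP [/andP [/eqP -> /eqP ->] r] | /andP [/andP [/eqP -> /eqP ->] r]];
        apply/HE; [left | right; left]; exists i, j; rewrite ?hij ?r.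
      - by [].
      - by rewrite /= !Po_L.
Qed.
End OddTr.


Lemma other k (hk : 1 < k) (x : 'I_k) : exists y, y != x.
Proof.
have h0 : 0 < k by apply: ltnW.
case: (eqVneq x (Ordinal h0)) => [->|hx]; last by exists (Ordinal h0); rewrite eq_sym.
by exists (Ordinal hk); apply/eqP => /(congr1 val).
Qed.

Lemma core_graph (T : finType) (e : rel T) k L (g : rel 'I_k) (emb : od k -> T) :
  1 < k -> 0 < L -> symmetric g -> irreflexive g -> threshold g -> connected_graph g ->
  (forall x y : od k, validO L x -> validO L y -> emb x = emb y -> x = y) ->
  (forall x : T, exists2 d : od k, validO L d & x = emb d) ->
  (forall x y : od k, validO L x -> validO L y -> e (emb x) (emb y) = adjO L g x y) ->
  forall u v : T, exists C : {set T}, hole e C /\ u \in C /\ v \in C.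
Proof.
move=> hk hL gs gi gt gc Hinj Hcov Hadj.
have h0 : 0 < k by apply: ltnW.
apply: odd_core Hinj Hcov Hadj => //.
- move=> i; have [x hx] := dom gs gi gt (Ordinal h0) gc.
  case: (eqVneq i x) => [->|hix]; last by exists x; rewrite gs; apply: hx.
  by have [y hy] := other hk x; exists y; apply: hx.
- by move=> i j; apply: d2 => //; apply: gc.
Qed.

Definition flipO k L (d : od k) : od k := if d is OP i t then OP i (L - t) else OZ.

Lemma odd_main (l : nat) (T : finType) (e : rel T) : 5 <= l -> odd_apexed_frame l e ->
  forall u v : T, exists C : {set T}, hole e C /\ u \in C /\ v \in C.
Proof.
move=> hl [k [rA [a [b [Q [z H]]]]]]; move: H; cbv zeta.
set gA := [rel i j | (i != j) && rA i j]; set gB := [rel i j | (i != j) && ~~ rA i j].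
move=> [hk hsym hsz [hu hc] [thA thB cA cB HE]].
set L := (l - 3) %/ 2 in hsz.
have hL : 0 < L by rewrite /L; lia.
have hk2 : 1 < k by apply: leq_trans hk.
have gsA : symmetric gA by move=> i j; rewrite /gA /= eq_sym hsym.
have giA : irreflexive gA by move=> i; rewrite /gA /= eqxx.
have gsB : symmetric gB by move=> i j; rewrite /gB /= eq_sym hsym.
have giB : irreflexive gB by move=> i; rewrite /gB /= eqxx.
have cAB : forall i j, i != j -> ~~ gA i j -> gB i j.
  by move=> i j hij; rewrite /gA /gB /= hij.
have cBA : forall i j, i != j -> ~~ gB i j -> gA i j.
  by move=> i j hij; rewrite /gA /gB /= hij negbK.
have isoB : connected_graph gA -> ~ connected_graph gB.
  move=> hc'; have [x hx] := dom gsA giA thA (Ordinal (ltnW hk2)) hc'.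
  have [y hy] := other hk2 x.
  apply: (isolated_disc hy) => w; rewrite /gB /=.
  case: (eqVneq x w) => [<-|hxw] //=.
  have hw : w != x by rewrite eq_sym.
  by have := hx w hw; rewrite /gA /= hxw /= => ->.
have isoA : connected_graph gB -> ~ connected_graph gA.
  move=> hc'; have [x hx] := dom gsB giB thB (Ordinal (ltnW hk2)) hc'.
  have [y hy] := other hk2 x.
  apply: (isolated_disc hy) => w; rewrite /gA /=.
  case: (eqVneq x w) => [<-|hxw] //=.
  have hw : w != x by rewrite eq_sym.
  by have := hx w hw; rewrite /gB /= hxw /= => /negbTE ->.
have [[nA cB'] | [nB cA']] : (~ connected_graph gA /\ connected_graph gB) \/
                          (~ connected_graph gB /\ connected_graph gA).
  case: cA => [nA | [cA' _]]; case: cB => [nB | [cB' _]].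
  - by exfalso; apply: nB; apply: conn_compl nA.
  - by left.
  - by right.
  - by exfalso; apply: (isoB cA').
-
  have hAt : ~ connected_graph gA <-> true by split.
  have hBf : ~ connected_graph gB <-> false by split => // /(_ cB').
  have Hadj := eO hsz hu hAt hBf HE.
  have vf : forall d : od k, validO L (flipO L d) by case=> //= i t; rewrite leq_subr.
  apply: (core_graph (emb := fun d => embO a b Q z (flipO L d)) hk2 hL gsB giB thB cB').
  + move=> x y hx hy /(embO_inj hsz hu (vf x) (vf y)).
    case: x hx => [|i t] hx; case: y hy => [|j t'] hy //= [-> h].
    by move: hx hy => /= hx hy; congr OP; lia.
  + move=> x; have [d hd ->] := embO_cov hsz hc x; exists (flipO L d) => //.
    by case: d hd => //= i t ht; rewrite subKn.
  + move=> x y hx hy; rewrite Hadj //.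
    case: x hx => [|i t] hx; case: y hy => [|j t'] hy //=; rewrite ?andbT ?andbF ?orbF; move: hx hy => /= hx hy.
    * clear -hy; lia.
    * clear -hx; lia.
    * case: (eqVneq i j) => [_|hij]; first by clear -hx hy; lia.
      rewrite /gB /= ?negbK; case: (rA i j); clear -hx hy; lia.
-
  have hAf : ~ connected_graph gA <-> false by split => // /(_ cA').
  have hBt : ~ connected_graph gB <-> true by split.
  have Hadj := eO hsz hu hAf hBt HE.
  apply: (core_graph (emb := embO a b Q z) hk2 hL gsA giA thA cA').
  + exact: embO_inj hsz hu.
  + exact: embO_cov hsz hc.
  + move=> x y hx hy; rewrite Hadj //.
    case: x {hx} => [|i t]; case: y {hy} => [|j t'] //=; rewrite ?andbF ?andbT //.
    by case: (eqVneq i j) => // hij; rewrite /gA /= hij.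
Qed.


Inductive ed (n m : nat) := ZA | ZB | PV of 'I_n & nat | QV of 'I_m & nat.
Arguments ZA {n m}. Arguments ZB {n m}. Arguments PV {n m}. Arguments QV {n m}.

Section EvenCore.
Variables (T : finType) (e : rel T) (n m L : nat) (r : 'I_n -> 'I_m -> bool) (emb : ed n m -> T).
Definition validE (d : ed n m) := match d with PV _ t => t <= L | QV _ t => t <= L.+1 | _ => true end.
Definition adjE (x y : ed n m) : bool :=
 match x, y with
 | ZA, PV _ t | PV _ t, ZA => t == 0
 | ZA, QV _ t | QV _ t, ZA => t == 0
 | ZB, PV _ t | PV _ t, ZB => t == L
 | ZB, QV _ t | QV _ t, ZB => t == L.+1
 | PV i t, PV i' t' => (i == i') && ((t.+1 == t') || (t'.+1 == t))
 | PV i t, QV j t' | QV j t', PV i t =>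
     ((t == 0) && (t' == 0) && r i j) || ((t == L) && (t' == L.+1) && ~~ r i j)
 | QV j t, QV j' t' => if j == j' then (t.+1 == t') || (t'.+1 == t)
     else ((t == 0) && (t' == 0)) || ((t == L.+1) && (t' == L.+1))
 | _, _ => false
 end.

Hypotheses (HL : 1 <= L) (Hn : 1 < n)
 (Ha0 : exists i, forall j, ~~ r i j) (Hb0 : exists i, forall j, r i j)
 (Hinj : forall x y, validE x -> validE y -> emb x = emb y -> x = y)
 (Hcov : forall x, exists2 d, validE d & x = emb d)
 (Hadj : forall x y, validE x -> validE y -> e (emb x) (emb y) = adjE x y).

Definition g1 (i i' : 'I_n) p : ed n m :=
  if p == 0 then ZA else if p <= L.+1 then PV i p.-1 else if p == L.+2 then ZB
  else PV i' (L + L + 3 - p).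
Definition g2 (i : 'I_n) (j : 'I_m) p : ed n m :=
  if p == 0 then ZA else if p <= L.+2 then QV j p.-1 else PV i (L + L + 3 - p).
Definition g3 (i : 'I_n) (j : 'I_m) p : ed n m :=
  if p == 0 then ZB else if p <= L.+2 then QV j (L.+2 - p) else PV i (p - L.+3).
Definition g4 (j j' : 'I_m) p : ed n m :=
  if p <= L.+1 then QV j p else QV j' (L + L + 3 - p).

Notation N := (L + L + 4).

Lemma hole_g1 i i' : i != i' -> hole e [set x in mkseq (emb \o g1 i i') N].
Proof.
move=> hne; have hne' : i' != i by rewrite eq_sym.
have hv : forall p, p < N -> validE (g1 i i' p).
  by move=> p hp; rewrite /g1; splitifs => //=; clr; lia.
apply: hole_mk; first by clr; lia.
- move=> p q hp hq /= HH; have := Hinj (hv p hp) (hv q hq) HH; rewrite /g1.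
  by splitifs; solve_inj.
- move=> p q hp hq /=; rewrite Hadj ?hv //; rewrite /g1; splitifs;
  rewrite /adjE ?eqxx ?(negbTE hne) ?(negbTE hne') /cyc /=; clr; lia.
Qed.

Lemma hole_g2 i j : ~~ r i j -> hole e [set x in mkseq (emb \o g2 i j) N].
Proof.
move=> hr.
have hv : forall p, p < N -> validE (g2 i j p).
  by move=> p hp; rewrite /g2; splitifs => //=; clr; lia.
apply: hole_mk; first by clr; lia.
- move=> p q hp hq /= HH; have := Hinj (hv p hp) (hv q hq) HH; rewrite /g2.
  by splitifs; solve_inj.
- move=> p q hp hq /=; rewrite Hadj ?hv //; rewrite /g2; splitifs;
  rewrite /adjE ?eqxx ?(negbTE hr) /cyc /=; clr; lia.
Qed.

Lemma hole_g3 i j : r i j -> hole e [set x in mkseq (emb \o g3 i j) N].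
Proof.
move=> hr.
have hv : forall p, p < N -> validE (g3 i j p).
  by move=> p hp; rewrite /g3; splitifs => //=; clr; lia.
apply: hole_mk; first by clr; lia.
- move=> p q hp hq /= HH; have := Hinj (hv p hp) (hv q hq) HH; rewrite /g3.
  by splitifs; solve_inj.
- move=> p q hp hq /=; rewrite Hadj ?hv //; rewrite /g3; splitifs;
  rewrite /adjE ?eqxx ?hr /cyc /=; clr; lia.
Qed.

Lemma hole_g4 j j' : j != j' -> hole e [set x in mkseq (emb \o g4 j j') N].
Proof.
move=> hne; have hne' : j' != j by rewrite eq_sym.
have hv : forall p, p < N -> validE (g4 j j' p).
  by move=> p hp; rewrite /g4; splitifs => //=; clr; lia.
apply: hole_mk; first by clr; lia.
- move=> p q hp hq /= HH; have := Hinj (hv p hp) (hv q hq) HH; rewrite /g4.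
  by splitifs; solve_inj.
- move=> p q hp hq /=; rewrite Hadj ?hv //; rewrite /g4; splitifs;
  rewrite /adjE ?eqxx ?(negbTE hne) ?(negbTE hne') /cyc /=; clr; lia.
Qed.

Lemma in_mk (f : nat -> ed n m) p d : p < N -> f p = d -> emb d \in [set x in mkseq (emb \o f) N].
Proof. by move=> hp <-; apply: (mem_mk (emb \o f)). Qed.

Ltac pos_tac := splitifs; first [ reflexivity | (exfalso; clr; lia) | (congr PV; clr; lia) | (congr QV; clr; lia) ].

Definition good (du dv : ed n m) := exists C, hole e C /\ emb du \in C /\ emb dv \in C.

Lemma good_sym du dv : good du dv -> good dv du.
Proof. by move=> [C [h [h1 h2]]]; exists C. Qed.

Definition inP (i i' : 'I_n) (d : ed n m) := d = ZA \/ d = ZB \/ exists t, t <= L /\ (d = PV i t \/ d = PV i' t).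

Lemma good_P i i' du dv : i != i' -> inP i i' du -> inP i i' dv -> good du dv.
Proof.
move=> hne hu hv; exists [set x in mkseq (emb \o g1 i i') N]; split; first exact: hole_g1.
have H : forall d, inP i i' d -> emb d \in [set x in mkseq (emb \o g1 i i') N].
  move=> d [-> | [-> | [t [ht [-> | ->]]]]].
  - by apply: (in_mk (p := 0)); [clr; lia | rewrite /g1; pos_tac].
  - by apply: (in_mk (p := L.+2)); [clr; lia | rewrite /g1; pos_tac].
  - by apply: (in_mk (p := t.+1)); [clr; lia | rewrite /g1; pos_tac].
  - by apply: (in_mk (p := L + L + 3 - t)); [clr; lia | rewrite /g1; pos_tac].
by split; apply: H.
Qed.

Lemma good_QA j t ia : t <= L.+1 -> (forall j, ~~ r ia j) -> good (QV j t) ZA.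
Proof.
move=> ht hia; exists [set x in mkseq (emb \o g2 ia j) N]; split; first exact: hole_g2.
split.
- by apply: (in_mk (p := t.+1)); [clr; lia | rewrite /g2; pos_tac].
- by apply: (in_mk (p := 0)); [clr; lia | rewrite /g2; pos_tac].
Qed.

Lemma good_QB j t ib : t <= L.+1 -> (forall j, r ib j) -> good (QV j t) ZB.
Proof.
move=> ht hib; exists [set x in mkseq (emb \o g3 ib j) N]; split; first exact: hole_g3.
split.
- by apply: (in_mk (p := L.+2 - t)); [clr; lia | rewrite /g3; pos_tac].
- by apply: (in_mk (p := 0)); [clr; lia | rewrite /g3; pos_tac].
Qed.

Lemma good_QP j t i t' : t <= L.+1 -> t' <= L -> good (QV j t) (PV i t').
Proof.
move=> ht ht'; case: (boolP (r i j)) => hr.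
- exists [set x in mkseq (emb \o g3 i j) N]; split; first exact: hole_g3.
  split.
  + by apply: (in_mk (p := L.+2 - t)); [clr; lia | rewrite /g3; pos_tac].
  + by apply: (in_mk (p := t' + L.+3)); [clr; lia | rewrite /g3; pos_tac].
- exists [set x in mkseq (emb \o g2 i j) N]; split; first exact: hole_g2.
  split.
  + by apply: (in_mk (p := t.+1)); [clr; lia | rewrite /g2; pos_tac].
  + by apply: (in_mk (p := L + L + 3 - t')); [clr; lia | rewrite /g2; pos_tac].
Qed.

Lemma good_QQ j t j' t' : t <= L.+1 -> t' <= L.+1 -> good (QV j t) (QV j' t').
Proof.
move=> ht ht'; case: (eqVneq j j') => [<-|hne].
- have [ia hia] := Ha0.
  exists [set x in mkseq (emb \o g2 ia j) N]; split; first exact: hole_g2.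
  split.
  + by apply: (in_mk (p := t.+1)); [clr; lia | rewrite /g2; pos_tac].
  + by apply: (in_mk (p := t'.+1)); [clr; lia | rewrite /g2; pos_tac].
- exists [set x in mkseq (emb \o g4 j j') N]; split; first exact: hole_g4.
  split.
  + by apply: (in_mk (p := t)); [clr; lia | rewrite /g4; pos_tac].
  + by apply: (in_mk (p := L + L + 3 - t')); [clr; lia | rewrite /g4; pos_tac].
Qed.

Lemma even_core u v : exists C, hole e C /\ u \in C /\ v \in C.
Proof.
have [du hdu ->] := Hcov u; have [dv hdv ->] := Hcov v.
rewrite -/(good du dv).
have [ia hia] := Ha0; have [ib hib] := Hb0.
have h0 : 0 < n by apply: ltnW.
pose i0 : 'I_n := Ordinal h0.
have gQ : forall j t d, t <= L.+1 -> validE d -> good (QV j t) d.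
  move=> j t [| | i t' | j' t'] ht hd /=.
  - exact: good_QA hia.
  - exact: good_QB hib.
  - exact: good_QP.
  - exact: good_QQ.
case: du hdu => [| | i t | j t] hdu; last exact: gQ.
- case: dv hdv => [| | i' t' | j' t'] hdv; last (by apply: good_sym; apply: gQ).
  + have [i1 h1] := other Hn i0; apply: (good_P (i := i0) (i' := i1)); rewrite 1?eq_sym //; by left.
  + have [i1 h1] := other Hn i0; apply: (good_P (i := i0) (i' := i1)); rewrite 1?eq_sym //; [by left | by right; left].
  + have [i1 h1] := other Hn i'; apply: (good_P (i := i') (i' := i1)); rewrite 1?eq_sym //; [by left | by right; right; exists t'; split => //; left].
- case: dv hdv => [| | i' t' | j' t'] hdv; last (by apply: good_sym; apply: gQ).
  + have [i1 h1] := other Hn i0; apply: (good_P (i := i0) (i' := i1)); rewrite 1?eq_sym //; [by right; left | by left].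
  + have [i1 h1] := other Hn i0; apply: (good_P (i := i0) (i' := i1)); rewrite 1?eq_sym //; by right; left.
  + have [i1 h1] := other Hn i'; apply: (good_P (i := i') (i' := i1)); rewrite 1?eq_sym //; [by right; left | by right; right; exists t'; split => //; left].
- case: dv hdv => [| | i' t' | j' t'] hdv; last (by apply: good_sym; apply: gQ).
  + have [i1 h1] := other Hn i; apply: (good_P (i := i) (i' := i1)); rewrite 1?eq_sym //; [by right; right; exists t; split => //; left | by left].
  + have [i1 h1] := other Hn i; apply: (good_P (i := i) (i' := i1)); rewrite 1?eq_sym //; [by right; right; exists t; split => //; left | by right; left].
  + case: (eqVneq i i') => [<-|hne].
    * have [i1 h1] := other Hn i; apply: (good_P (i := i) (i' := i1)); rewrite 1?eq_sym //;
        [by right; right; exists t; split => //; left | by right; right; exists t'; split => //; left].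
    * apply: (good_P (i := i) (i' := i')) => //;
        [by right; right; exists t; split => //; left | by right; right; exists t'; split => //; right].
Qed.
End EvenCore.


Section Fam.
Variables (T : finType) (I : finType) (F : I -> seq T).

Lemma ufg (r : seq I) : uniq r -> uniq (flatten [seq F i | i <- r]) ->
  (forall i, i \in r -> uniq (F i)) /\
  (forall i j x, i \in r -> j \in r -> x \in F i -> x \in F j -> i = j).
Proof.
elim: r => [|y r IH] //; rewrite cons_uniq map_cons => /andP [hy hr].
rewrite (_ : flatten (F y :: [seq F i | i <- r]) = F y ++ flatten [seq F i | i <- r]) //.
rewrite cat_uniq => /and3P [u1 hn u2].
have [IH1 IH2] := IH hr u2.
have hf : forall x j, j \in r -> x \in F j -> x \notin F y.
  move=> x j hj hx; apply: (hasPn hn); apply/flatten_mapP; by exists j.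
split.
- by move=> i; rewrite in_cons => /orP [/eqP -> // | /IH1].
- move=> i j x hi' hj' hxi hxj; move: hi' hj'; rewrite !in_cons => /orP [/eqP E1 | hi] /orP [/eqP E2 | hj]; subst => //.
  + by move: (hf _ _ hj hxj); rewrite hxi.
  + by move: (hf _ _ hi hxi); rewrite hxj.
  + exact: IH2 hi hj hxi hxj.
Qed.

Lemma ufam : uniq (flatten [seq F i | i <- enum I]) ->
  (forall i, uniq (F i)) /\ (forall i j x, x \in F i -> x \in F j -> i = j).
Proof.
move=> hu; have [h1 h2] := ufg (enum_uniq I) hu.
by split; [move=> i; apply: h1 | move=> i j x; apply: h2]; rewrite mem_enum.
Qed.

Lemma memfam i x : x \in F i -> x \in flatten [seq F i | i <- enum I].
Proof. by move=> hx; apply/flatten_mapP; exists i => //; rewrite mem_enum. Qed.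
End Fam.

Section PE.
Variables (T : finType) (D : Type) (valid : D -> bool) (emb : D -> T) (s : seq T) (M : nat)
  (pos : nat -> D) (x0 : T).
Hypotheses (Hs : size s = M.+1) (Hnth : forall t, t <= M -> nth x0 s t = emb (pos t))
  (Hv : forall t, t <= M -> valid (pos t))
  (Hi : forall x y, valid x -> valid y -> emb x = emb y -> x = y).

Lemma pe_gen dx dy : valid dx -> valid dy ->
  path_edge s (emb dx) (emb dy) <->
  exists t, t < M /\ ((dx = pos t /\ dy = pos t.+1) \/ (dy = pos t /\ dx = pos t.+1)).
Proof.
move=> hx hy; split.
- move=> [j [hj H]]; rewrite Hs ltnS in hj; exists j; split => //.
  have hj1 : j < size s by rewrite Hs ltnW.
  have hj2 : j.+1 < size s by rewrite Hs.
  have v1 := Hv (ltnW hj); have v2 := Hv hj.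
  case: H => [[h1 h2] | [h1 h2]]; [left | right];
    rewrite (set_nth_default x0 _ hj1) Hnth ?(ltnW hj) // in h1;
    rewrite (set_nth_default x0 _ hj2) Hnth // in h2.
  + by split; [apply: (Hi hx v1 h1) | apply: (Hi hy v2 h2)].
  + by split; [apply: (Hi hy v1 h1) | apply: (Hi hx v2 h2)].
- move=> [t [ht H]]; exists t; rewrite Hs; split => //.
  have hj1 : t < size s by rewrite Hs ltnW.
  have hj2 : t.+1 < size s by rewrite Hs.
  case: H => [[-> ->] | [-> ->]]; [left | right];
    rewrite (set_nth_default x0 _ hj1) (set_nth_default x0 _ hj2) !Hnth // ltnW //.
Qed.
End PE.

Section EvenTr.
Variables (T : finType) (e : rel T) (n m L : nat) (r : 'I_n -> 'I_m -> bool)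
  (a b : 'I_n -> T) (c d : 'I_m -> T) (QP : 'I_n -> seq T) (QQ : 'I_m -> seq T) (za zb : T).
Definition Pe i := Defs.fpath (a i) (QP i) (b i).
Definition Qe j := Defs.fpath (c j) (QQ j) (d j).
Arguments Pe : simpl never. Arguments Qe : simpl never.
Hypotheses (HszP : forall i, (size (QP i)).+1 = L) (HszQ : forall j, (size (QQ j)).+1 = L.+1)
 (Hu : uniq (za :: zb :: flatten [seq Pe i | i <- enum 'I_n] ++ flatten [seq Qe j | j <- enum 'I_m]))
 (Hc : forall x, x \in za :: zb :: flatten [seq Pe i | i <- enum 'I_n] ++ flatten [seq Qe j | j <- enum 'I_m]).

Definition embE (dd : ed n m) : T :=
  match dd with ZA => za | ZB => zb | PV i t => nth za (Pe i) t | QV j t => nth za (Qe j) t end.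

Lemma size_Pe i : size (Pe i) = L.+1.
Proof. by rewrite /Pe /Defs.fpath /= size_rcons HszP. Qed.
Lemma size_Qe j : size (Qe j) = L.+2.
Proof. by rewrite /Qe /Defs.fpath /= size_rcons HszQ. Qed.
Lemma Pe_L i : nth za (Pe i) L = b i.
Proof. by rewrite /Pe /Defs.fpath -(HszP i) /= nth_rcons ltnn eqxx. Qed.
Lemma Qe_L j : nth za (Qe j) L.+1 = d j.
Proof. by rewrite /Qe /Defs.fpath -(HszQ j) /= nth_rcons ltnn eqxx. Qed.

Lemma factsP : (forall i, uniq (Pe i)) /\ (forall i j x, x \in Pe i -> x \in Pe j -> i = j).
Proof.
move: Hu; rewrite !cons_uniq cat_uniq => /andP [_ /andP [_ /and3P [h1 _ _]]].
exact: ufam.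
Qed.
Lemma factsQ : (forall j, uniq (Qe j)) /\ (forall i j x, x \in Qe i -> x \in Qe j -> i = j).
Proof.
move: Hu; rewrite !cons_uniq cat_uniq => /andP [_ /andP [_ /and3P [_ _ h3]]].
exact: ufam.
Qed.
Lemma factsPQ i j x : x \in Pe i -> x \in Qe j -> False.
Proof.
move: Hu; rewrite !cons_uniq cat_uniq => /andP [_ /andP [_ /and3P [_ h2 _]]] hp hq.
by move/hasPn: h2 => /(_ x (memfam hq)); rewrite (memfam hp).
Qed.
Lemma factsZ : [/\ za != zb, (forall i, za \notin Pe i), (forall j, za \notin Qe j),
               (forall i, zb \notin Pe i) & (forall j, zb \notin Qe j)].
Proof.
move: Hu; rewrite !cons_uniq => /andP [hza /andP [hzb _]].
split.
- by apply: contra hza => /eqP ->; rewrite inE eqxx.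
- by move=> i; apply: contra hza => h; rewrite inE mem_cat (memfam h) orbT.
- by move=> j; apply: contra hza => h; rewrite inE mem_cat (memfam h) !orbT.
- by move=> i; apply: contra hzb => h; rewrite mem_cat (memfam h).
- by move=> j; apply: contra hzb => h; rewrite mem_cat (memfam h) orbT.
Qed.

Lemma embE_inj x y : validE L x -> validE L y -> embE x = embE y -> x = y.
Proof.
have [uP fP] := factsP; have [uQ fQ] := factsQ.
have [zz zaP zaQ zbP zbQ] := factsZ.
have mP : forall i t, t <= L -> nth za (Pe i) t \in Pe i.
  by move=> i t ht; apply: mem_nth; rewrite size_Pe.
have mQ : forall j t, t <= L.+1 -> nth za (Qe j) t \in Qe j.
  by move=> j t ht; apply: mem_nth; rewrite size_Qe.
case: x => [| | i t | j t]; case: y => [| | i' t' | j' t'] //= hx hy.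
- by move=> h; rewrite h eqxx in zz.
- by move=> h; move: (zaP i'); rewrite h mP.
- by move=> h; move: (zaQ j'); rewrite h mQ.
- by move=> h; rewrite h eqxx in zz.
- by move=> h; move: (zbP i'); rewrite h mP.
- by move=> h; move: (zbQ j'); rewrite h mQ.
- by move=> h; move: (zaP i); rewrite -h mP.
- by move=> h; move: (zbP i); rewrite -h mP.
- move=> h; have := mP i' t' hy; rewrite -h => hj.
  have hij := fP _ _ _ (mP i t hx) hj; subst i'.
  by move/eqP: h; rewrite nth_uniq ?size_Pe // => /eqP ->.
- by move=> h; have := mQ j' t' hy; rewrite -h => /(factsPQ (mP i t hx)).
- by move=> h; move: (zaQ j); rewrite -h mQ.
- by move=> h; move: (zbQ j); rewrite -h mQ.
- by move=> h; have := mP i' t' hy; rewrite -h => /factsPQ /(_ (mQ j t hx)).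
- move=> h; have := mQ j' t' hy; rewrite -h => hj.
  have hij := fQ _ _ _ (mQ j t hx) hj; subst j'.
  by move/eqP: h; rewrite nth_uniq ?size_Qe // => /eqP ->.
Qed.

Lemma embE_cov x : exists2 dd, validE L dd & x = embE dd.
Proof.
move: (Hc x); rewrite !inE mem_cat => /orP [/eqP -> | /orP [/eqP -> | /orP [hP | hQ]]].
- by exists ZA.
- by exists ZB.
- move/flatten_mapP: hP => [i _ hx].
  exists (PV i (index x (Pe i))) => /=; last by rewrite nth_index.
  by have := index_mem x (Pe i); rewrite size_Pe ltnS hx.
- move/flatten_mapP: hQ => [j _ hx].
  exists (QV j (index x (Qe j))) => /=; last by rewrite nth_index.
  by have := index_mem x (Qe j); rewrite size_Qe ltnS hx.
Qed.

Lemma peP i dx dy : validE L dx -> validE L dy ->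
  path_edge (Pe i) (embE dx) (embE dy) <->
  exists t, t < L /\ ((dx = PV i t /\ dy = PV i t.+1) \/ (dy = PV i t /\ dx = PV i t.+1)).
Proof.
apply: (pe_gen (valid := validE L) (pos := fun t => PV i t) (x0 := za)).
- exact: size_Pe.
- by [].
- by [].
- exact: embE_inj.
Qed.
Lemma peQ j dx dy : validE L dx -> validE L dy ->
  path_edge (Qe j) (embE dx) (embE dy) <->
  exists t, t < L.+1 /\ ((dx = QV j t /\ dy = QV j t.+1) \/ (dy = QV j t /\ dx = QV j t.+1)).
Proof.
apply: (pe_gen (valid := validE L) (pos := fun t => QV j t) (x0 := za)).
- exact: size_Qe.
- by [].
- by [].
- exact: embE_inj.
Qed.

Lemma eE : (forall x y, e x y <->
   (exists j1 j2, [/\ x = c j1, y = c j2 & j1 != j2]) \/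
   (exists i j, (x = a i /\ y = c j \/ y = a i /\ x = c j) /\ r i j) \/
   (exists j1 j2, [/\ x = d j1, y = d j2 & j1 != j2]) \/
   (exists i j, (x = b i /\ y = d j \/ y = b i /\ x = d j) /\ ~~ r i j) \/
   (exists i, path_edge (Pe i) x y) \/
   (exists j, path_edge (Qe j) x y) \/
   ((x = za /\ ((exists i, y = a i) \/ (exists j, y = c j))) \/
    (y = za /\ ((exists i, x = a i) \/ (exists j, x = c j)))) \/
   ((x = zb /\ ((exists i, y = b i) \/ (exists j, y = d j))) \/
    (y = zb /\ ((exists i, x = b i) \/ (exists j, x = d j))))) ->
  forall x y, validE L x -> validE L y -> e (embE x) (embE y) = adjE L r x y.
Proof.
move=> HE x y hx hy.
have eb : forall i, b i = embE (PV i L) by move=> i; rewrite /= Pe_L.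
have ed' : forall j, d j = embE (QV j L.+1) by move=> j; rewrite -Qe_L.
have vP0 : forall i, validE L (@PV n m i 0) by [].
have vPL : forall i, validE L (@PV n m i L) by move=> i /=.
have vQ0 : forall j, validE L (@QV n m j 0) by [].
have vQL : forall j, validE L (@QV n m j L.+1) by move=> j /=.
have vA : validE L (@ZA n m) by [].
have vB : validE L (@ZB n m) by [].
have I := embE_inj.
apply/idP/idP.
- move/HE => [ [j1 [j2 [ex ey hne]]] | [ [i [j [[[ex ey]|[ey ex]] hr]]] |
    [ [j1 [j2 [ex ey hne]]] | [ [i [j [[[ex ey]|[ey ex]] hr]]] | [ [i hp] | [ [j hp] |
    [ [[ex [[i ey]|[j ey]]] | [ey [[i ex]|[j ex]]]] |
     [[ex [[i ey]|[j ey]]] | [ey [[i ex]|[j ex]]]] ]]]]]]].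
  + move: (I _ _ hx (vQ0 j1) ex) (I _ _ hy (vQ0 j2) ey) => -> -> /=.
    by rewrite (negbTE hne).
  + by move: (I _ _ hx (vP0 i) ex) (I _ _ hy (vQ0 j) ey) => -> -> /=; rewrite hr.
  + by move: (I _ _ hx (vQ0 j) ex) (I _ _ hy (vP0 i) ey) => -> -> /=; rewrite hr.
  + rewrite ed' in ex; rewrite ed' in ey.
    move: (I _ _ hx (vQL j1) ex) (I _ _ hy (vQL j2) ey) => -> -> /=.
    by rewrite (negbTE hne) /= !eqxx ?orbT.
  + rewrite eb in ex; rewrite ed' in ey.
    by move: (I _ _ hx (vPL i) ex) (I _ _ hy (vQL j) ey) => -> -> /=; rewrite hr !eqxx orbT.
  + rewrite ed' in ex; rewrite eb in ey.
    by move: (I _ _ hx (vQL j) ex) (I _ _ hy (vPL i) ey) => -> -> /=; rewrite hr !eqxx orbT.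
  + move/(peP i hx hy): hp => [t [ht [[-> ->] | [-> ->]]]] /=; by rewrite !eqxx ?orbT.
  + move/(peQ j hx hy): hp => [t [ht [[-> ->] | [-> ->]]]] /=; by rewrite !eqxx ?orbT.
  + by move: (I _ _ hx vA ex) (I _ _ hy (vP0 i) ey) => -> ->.
  + by move: (I _ _ hx vA ex) (I _ _ hy (vQ0 j) ey) => -> ->.
  + by move: (I _ _ hy vA ey) (I _ _ hx (vP0 i) ex) => -> ->.
  + by move: (I _ _ hy vA ey) (I _ _ hx (vQ0 j) ex) => -> ->.
  + rewrite eb in ey; by move: (I _ _ hx vB ex) (I _ _ hy (vPL i) ey) => -> -> /=.
  + rewrite ed' in ey; by move: (I _ _ hx vB ex) (I _ _ hy (vQL j) ey) => -> -> /=.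
  + rewrite eb in ex; by move: (I _ _ hy vB ey) (I _ _ hx (vPL i) ex) => -> -> /=.
  + rewrite ed' in ex; by move: (I _ _ hy vB ey) (I _ _ hx (vQL j) ex) => -> -> /=.
- case: x hx => [| | i t | j t] hx; case: y hy => [| | i' t' | j' t'] hy //= H; apply/HE.
  + move/eqP: H => ->; do 6 right; left; left; split => //; left; by exists i'.
  + move/eqP: H => ->; do 6 right; left; left; split => //; right; by exists j'.
  + move/eqP: H => ->; do 7 right; left; split => //; left; by exists i'; rewrite Pe_L.
  + move/eqP: H => ->; do 7 right; left; split => //; right; by exists j'; rewrite Qe_L.
  + move/eqP: H => ->; do 6 right; left; right; split => //; left; by exists i.
  + move/eqP: H => ->; do 7 right; right; split => //; left; by exists i; rewrite Pe_L.
  + case/andP: H => /eqP ei; subst i' => /orP [/eqP ht | /eqP ht]; do 4 right; left; exists i;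
      apply: (proj2 (peP i hx hy)).
    * by exists t; rewrite -ht in hy *; split => //; left.
    * by exists t'; rewrite -ht in hx *; split => //; right.
  + case/orP: H => /andP [/andP [/eqP -> /eqP ->] hr].
    * by right; left; exists i, j'; split => //; left.
    * do 3 right; left; exists i, j'; split => //; left; by rewrite Pe_L Qe_L.
  + move/eqP: H => ->; do 6 right; left; right; split => //; right; by exists j.
  + move/eqP: H => ->; do 7 right; right; split => //; right; by exists j; rewrite Qe_L.
  + case/orP: H => /andP [/andP [/eqP -> /eqP ->] hr].
    * by right; left; exists i', j; split => //; right.
    * do 3 right; left; exists i', j; split => //; right; by rewrite Pe_L Qe_L.
  + move: hy H; case: (eqVneq j j') => [<-|hne] hy.
    * move=> /orP [/eqP ht | /eqP ht]; do 5 right; left; exists j;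
        apply: (proj2 (peQ j hx hy)).
      - by exists t; rewrite -ht in hy *; split => //; left.
      - by exists t'; rewrite -ht in hx *; split => //; right.
    * case/orP => /andP [/eqP -> /eqP ->].
      - by left; exists j, j'.
      - by do 2 right; left; exists j, j'; rewrite !Qe_L.
Qed.
End EvenTr.


Lemma even_main (l : nat) (T : finType) (e : rel T) : 6 <= l -> even_apexed_frame l e ->
  forall u v : T, exists C : {set T}, hole e C /\ u \in C /\ v \in C.
Proof.
move=> hl [m [n [r [a [b [c [d [QP [QQ [za [zb H]]]]]]]]]]]; move: H; cbv zeta.
move=> [[hn hmn] [hszP hszQ] [hu hc] [_ [ha0 hb0]] HE].
set L := l %/ 2 - 2 in hszP.
have hszQ' : forall j, (size (QQ j)).+1 = L.+1 by move=> j; rewrite hszQ /L; clear -hl; lia.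
have hL : 0 < L by rewrite /L; clear -hl; lia.
have Hadj := eE hszP hszQ' hu HE.
apply: (even_core (emb := embE a b c d QP QQ za zb) hL hn ha0 hb0).
- exact: embE_inj hszP hszQ' hu.
- exact: embE_cov hszP hszQ' hc.
- exact: Hadj.
Qed.


Theorem mainTheorem13 (l : nat) (T : finType) (e : rel T) :
  apexed_frame l e ->
  forall u v : T, exists C : {set T}, hole e C /\ u \in C /\ v \in C.
Proof.
move=> [[_ [hl H]] | [_ [hl H]]]; [exact: odd_main hl H | exact: even_main hl H].
Qed.
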